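(* Let $\mathcal{M}=(S,P,E,s_{init},L)$ be a CTMC, let $\varepsilon,\delta,\varepsilon_1,\delta_1,\varepsilon_2,\delta_2\geq 0$, and let $s,s',s''\in S$. (1) The relation $\sim_{\varepsilon,\delta}$ is the largest $(\varepsilon,\delta)$-bisimulation on $\mathcal{M}$, i.e. it is itself an $(\varepsilon,\delta)$-bisimulation and contains every $(\varepsilon,\delta)$-bisimulation on $\mathcal{M}$. (2) If $s\sim_{\varepsilon_1,\delta_1}s'$ and $s'\sim_{\varepsilon_2,\delta_2}s''$, then $s\sim_{\varepsilon_1+\varepsilon_2,\,\delta_1+\delta_2}s''$. (3) $s\sim s'$ if and only if $s\sim_{0,0}s'$.
   Context: A CTMC is a tuple $\mathcal{M}=(S,P,E,s_{init},L)$ with $S$ a finite nonempty set of states, $P\colon S\to\mathrm{Distr}(S)$ a transition probability function (self-loops allowed; write $P(s,s')=P(s)(s')$ and $P(s,A)=\sum_{a\in A}P(s,a)$ for $A\subseteq S$), $E\colon S\to\mathbb{R}_{>0}$ an exit rate function, $s_{init}\in S$ an initial state, and $L\colon S\to 2^{AP}$ a labeling function. For a relation $R\subseteq S\times S$ and $A\subseteq S$ let $R(A)=\{t\in S\mid \exists s\in A: (s,t)\in R\}$. For $\varepsilon,\delta\geq 0$, a reflexive and symmetric relation $R\subseteq S\times S$ is an $(\varepsilon,\delta)$-bisimulation if for all $(s,s')\in R$: (i) $L(s)=L(s')$; (ii) $|\ln E(s)-\ln E(s')|\leq\delta$; (iii) for all $A\subseteq S$, $P(s,A)\leq P(s',R(A))+\varepsilon$.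 States are $(\varepsilon,\delta)$-bisimilar, written $s\sim_{\varepsilon,\delta}s'$, if some $(\varepsilon,\delta)$-bisimulation contains $(s,s')$. A strong bisimulation is an equivalence relation $R$ on $S$ such that for all $(s,s')\in R$: $L(s)=L(s')$, $E(s)=E(s')$, and $P(s,C)=P(s',C)$ for every equivalence class $C$ of $R$; $s\sim s'$ means some strong bisimulation contains $(s,s')$. *)

(* Defs.v *)
From HB Require Import structures.
From mathcomp Require Import all_boot all_order all_algebra.
From mathcomp Require Import boolp classical_sets reals exp.
Set Implicit Arguments. Unset Strict Implicit. Unset Printing Implicit Defensive.
Import Order.TTheory GRing.Theory Num.Theory.
Local Open Scope ring_scope.

Record CTMC (R : realType) (AP : Type) := {
  state : finType;
  Ptr : state -> state -> R;
  Ptr_ge0 : forall s t, 0 <= Ptr s t;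
  Ptr_sum1 : forall s, \sum_(t : state) Ptr s t = 1;
  Erate : state -> R;
  Erate_gt0 : forall s, 0 < Erate s;
  s_init : state;
  Lab : state -> set AP
}.

Section Defs.
Variables (R : realType) (AP : Type) (M : CTMC R AP).
Local Notation S := (state M).

Definition PA (s : S) (A : {set S}) : R := \sum_(a in A) @Ptr _ _ M s a.

Definition rel_img (Rl : S -> S -> Prop) (A : {set S}) : {set S} :=
  [set t | `[< exists s, s \in A /\ Rl s t >]].

Definition eps_delta_bisim (eps del : R) (Rl : S -> S -> Prop) : Prop :=
  (forall s, Rl s s) /\ (forall s t, Rl s t -> Rl t s) /\
  forall s s', Rl s s' ->
    [/\ @Lab _ _ M s = @Lab _ _ M s',
        `| ln (@Erate _ _ M s) - ln (@Erate _ _ M s') | <= del &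
        forall A : {set S}, PA s A <= PA s' (rel_img Rl A) + eps].

Definition eps_delta_bisimilar (eps del : R) (s s' : S) : Prop :=
  exists Rl, eps_delta_bisim eps del Rl /\ Rl s s'.

Definition strong_bisim (Rl : S -> S -> Prop) : Prop :=
  [/\ (forall s, Rl s s), (forall s t, Rl s t -> Rl t s),
      (forall s t u, Rl s t -> Rl t u -> Rl s u) &
      forall s s', Rl s s' ->
        [/\ @Lab _ _ M s = @Lab _ _ M s', @Erate _ _ M s = @Erate _ _ M s' &
            (* for every equivalence class C = [x] of Rl *)
            forall x : S, PA s [set y | `[< Rl x y >]] = PA s' [set y | `[< Rl x y >]]]].

Definition strong_bisimilar (s s' : S) : Prop :=
  exists Rl, strong_bisim Rl /\ Rl s s'.
End Defs.

(* Main.v *)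
Require Import Defs.
From mathcomp Require Import all_boot all_order all_algebra.
From mathcomp Require Import boolp classical_sets reals exp.
From Stdlib Require Import Relations.Relation_Operators.
From mathcomp Require Import zify.
Import Order.TTheory GRing.Theory Num.Theory.
Local Open Scope ring_scope.

Section Aux.
Variables (R : realType) (AP : Type) (M : CTMC R AP).
Local Notation S := (state M).

Lemma PA_mono (s : S) (A B : {set S}) : A \subset B -> PA s A <= PA s B.
Proof.
move=> sAB; rewrite /PA [X in _ <= X](big_setID A) /= (finset.setIidPr sAB).
by rewrite lerDl sumr_ge0 // => i _; exact: Ptr_ge0.
Qed.

Lemma rel_imgP (Rl : S -> S -> Prop) (A : {set S}) t :
  reflect (exists s, s \in A /\ Rl s t) (t \in rel_img Rl A).
Proof. by rewrite inE; apply: asboolP. Qed.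

Lemma rel_img_sub (Rl : S -> S -> Prop) (A B : {set S}) :
  (forall a t, a \in A -> Rl a t -> t \in B) -> rel_img Rl A \subset B.
Proof. by move=> H; apply/fintype.subsetP => t /rel_imgP [a [aA Rat]]; exact: H Rat. Qed.

Lemma comp_step (R1 R2 Q : S -> S -> Prop) e1 d1 e2 d2 :
  eps_delta_bisim e1 d1 R1 -> eps_delta_bisim e2 d2 R2 ->
  (forall a u t, R1 a u -> R2 u t -> Q a t) ->
  forall x y z, R1 x y -> R2 y z ->
  [/\ @Lab _ _ M x = @Lab _ _ M z,
      `| ln (@Erate _ _ M x) - ln (@Erate _ _ M z) | <= d1 + d2 &
      forall A : {set S}, PA x A <= PA z (rel_img Q A) + (e1 + e2)].
Proof.
move=> [_ [_ H1]] [_ [_ H2]] HQ x y z xy yz.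
have [L1 D1 P1] := H1 _ _ xy; have [L2 D2 P2] := H2 _ _ yz.
split; first by rewrite L1 L2.
  by apply: le_trans (ler_distD (ln (@Erate _ _ M y)) _ _) _; exact: lerD D1 D2.
move=> A; apply: le_trans (P1 A) _.
apply: le_trans (lerD (P2 _) (lexx e1)) _.
rewrite -addrA [e2 + e1]addrC lerD2r; apply: PA_mono.
apply: rel_img_sub => u t /rel_imgP [a [aA au]] ut.
by apply/rel_imgP; exists a; split => //; exact: HQ ut.
Qed.

Lemma closed_eq (Rl : S -> S -> Prop) (s s' : S) :
  (forall x, Rl x x) -> (forall x y, Rl x y -> Rl y x) ->
  (forall x y z, Rl x y -> Rl y z -> Rl x z) ->
  (forall x, PA s [set y | `[< Rl x y >]] = PA s' [set y | `[< Rl x y >]]) ->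
  forall n (B : {set S}), (#|B| <= n)%N ->
  (forall a b, a \in B -> Rl a b -> b \in B) -> PA s B = PA s' B.
Proof.
move=> Hr Hs Ht HC; elim=> [|n IH] B.
  rewrite leqn0 => /eqP /cards0_eq -> _; by rewrite /PA !big_set0.
move=> Hn Hcl; case: (set_0Vmem B) => [->|[x xB]]; first by rewrite /PA !big_set0.
set C := [set y | `[< Rl x y >]].
have CB : C \subset B.
  by apply/fintype.subsetP => y; rewrite inE => /asboolP; exact: Hcl.
have eB : forall t, PA t B = PA t C + PA t (B :\: C).
  by move=> t; rewrite /PA (big_setID C) /= (finset.setIidPr CB).
rewrite !eB HC IH //.
  have := cardsID C B; rewrite (finset.setIidPr CB).
  have : (0 < #|C|)%N by apply/card_gt0P; exists x; rewrite inE; apply/asboolP.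
  lia.
move=> a b; rewrite !inE => /andP [aC aB] ab; rewrite (Hcl a b aB ab) andbT.
apply: contra aC; move=> /asboolP xb; apply/asboolP; apply: Ht xb (Hs _ _ ab).
Qed.

End Aux.

Theorem theorem2 (R : realType) (AP : Type) (M : CTMC R AP)
    (eps del eps1 del1 eps2 del2 : R) :
  0 <= eps -> 0 <= del -> 0 <= eps1 -> 0 <= del1 -> 0 <= eps2 -> 0 <= del2 ->
  (* (1) *)
  (@eps_delta_bisim _ _ M eps del (@eps_delta_bisimilar _ _ M eps del) /\
   forall Rl : state M -> state M -> Prop, @eps_delta_bisim _ _ M eps del Rl ->
     forall s s', Rl s s' -> @eps_delta_bisimilar _ _ M eps del s s') /\
  (* (2) *)
  (forall s s' s'' : state M,
     @eps_delta_bisimilar _ _ M eps1 del1 s s' -> @eps_delta_bisimilar _ _ M eps2 del2 s' s'' ->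
     @eps_delta_bisimilar _ _ M (eps1 + eps2) (del1 + del2) s s'') /\
  (* (3) *)
  (forall s s' : state M, @strong_bisimilar _ _ M s s' <-> @eps_delta_bisimilar _ _ M 0 0 s s').
Proof.
move=> he hd he1 hd1 he2 hd2.
split; [split|split].
- have eqb : eps_delta_bisim eps del (@eq (state M)).
    split; first by []; split; first by [].
    move=> s _ <-; split => //; first by rewrite subrr normr0.
    move=> A; rewrite -[PA s A]addr0.
    apply: lerD => //; apply: PA_mono; apply/fintype.subsetP => t tA.
    by apply/rel_imgP; exists t.
  split; first by move=> s; exists eq.
  split; first by move=> s t [Rl [[Hr [Hs H]] HR]]; exists Rl; split; [by split | exact: Hs].
  move=> s s' [Rl [HB HR]]; have [L D P] := HB.2.2 _ _ HR; split => // A.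
  apply: le_trans (P A) _; rewrite lerD2r; apply: PA_mono.
  apply: rel_img_sub => a t aA at'; apply/rel_imgP; exists a; split => //.
  by exists Rl.
- by move=> Rl HB s s' HR; exists Rl.
- move=> s s' s'' [R1 [B1 H1]] [R2 [B2 H2]].
  pose Q x z := (exists y, R1 x y /\ R2 y z) \/ (exists y, R2 x y /\ R1 y z).
  have HQ1 : forall a u t, R1 a u -> R2 u t -> Q a t by move=> a u t ? ?; left; exists u.
  have HQ2 : forall a u t, R2 a u -> R1 u t -> Q a t by move=> a u t ? ?; right; exists u.
  exists Q; split; last by left; exists s'.
  split; first by move=> x; left; exists x; split; [exact: B1.1 | exact: B2.1].
  split.
    move=> x z [[y [? ?]]|[y [? ?]]]; [right|left]; exists y; split;
      by [apply: B2.2.1 | apply: B1.2.1].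
  move=> x z [[y [xy yz]]|[y [xy yz]]].
    exact: (@comp_step _ _ M _ _ _ _ _ _ _ B1 B2 HQ1 _ _ _ xy yz).
  have [L D P] := @comp_step _ _ M _ _ _ _ _ _ _ B2 B1 HQ2 _ _ _ xy yz.
  split; [exact: L | by rewrite (addrC del1) | by move=> A; rewrite (addrC eps1)].
- move=> s s'; split.
  + move=> [Rl [[Hr Hs Ht H] HR]]; exists Rl; split => //.
    split => //; split => //.
    move=> x y xy; have [L E P] := H _ _ xy; split => //.
      by rewrite E subrr normr0.
    move=> A; rewrite addr0.
    apply: (@le_trans _ _ (PA x (rel_img Rl A))).
      by apply: PA_mono; apply/fintype.subsetP => t tA; apply/rel_imgP; exists t.
    rewrite (@closed_eq _ _ M _ _ _ Hr Hs Ht P _ _ (leqnn _)) //.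
    move=> a b /rel_imgP [c [cA ca]] ab; apply/rel_imgP; exists c; split => //.
    exact: Ht ca ab.
  + move=> [Rl [[Hr [Hs H]] HR]].
    pose T := clos_refl_trans (state M) Rl.
    have Tt : forall x y z, T x y -> T y z -> T x z by move=> x y z; apply: rt_trans.
    have Ts : forall x y, T x y -> T y x.
      move=> x y; elim=> [a b ab| a | a b c _ IH1 _ IH2].
      - by apply: rt_step; apply: Hs.
      - exact: rt_refl.
      - exact: rt_trans IH2 IH1.
    exists T; split; last exact: rt_step.
    split => //; first by move=> x; apply: rt_refl.
    move=> x y; elim=> [a b ab| a | a b c _ [L1 E1 P1] _ [L2 E2 P2]].
    * have [L D P] := H _ _ ab; split => //.
        apply: ln_inj; rewrite ?posrE ?Erate_gt0 //.
        by apply/eqP; rewrite -subr_eq0 -normr_le0.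
      have stepP : forall u v z, Rl u v ->
          PA u [set y | `[< T z y >]] <= PA v [set y | `[< T z y >]].
        move=> u v z uv; have [_ _ Pu] := H _ _ uv.
        apply: le_trans (Pu _) _; rewrite addr0; apply: PA_mono.
        apply: rel_img_sub => c t; rewrite !inE => /asboolP zc ct.
        exact: (Tt z c t (asboolW zc) (@rt_step _ Rl c t ct)).
      move=> z; apply: le_anti; apply/andP; split; [exact: stepP ab | exact: stepP (Hs _ _ ab)].
    * split => //.
    * split; [by rewrite L1 L2 | by rewrite E1 E2 | by move=> z; rewrite P1 P2].
Qed.
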